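(* Let $L$ be an $n\times n$ nonsingular M-matrix with integer entries. For every $f\in\mathbb{Z}^n$ with $f\ge 0$, the problem $$\min_{g\sim f,\ g\ge 0} E(g)$$ (minimum over $g\in\mathbb{Z}^n$) has a unique solution.
   Context: A Z-matrix is a square real matrix whose off-diagonal entries are all $\le 0$. A nonsingular M-matrix is a Z-matrix $L$ that is invertible with $L^{-1}$ having all entries nonnegative. Vector inequalities are entrywise. For $f,g\in\mathbb{Z}^n$, $f\sim g$ means $g-f=Lz$ for some $z\in\mathbb{Z}^n$. For $q\in\mathbb{Z}^n$ the energy is $E(q)=\|L^{-1}q\|_2^2$, where $\|v\|_2^2=v\cdot v$. *)

(* Defs.v *)
From HB Require Import structures.
From mathcomp Require Import all_boot all_order all_algebra.
Set Implicit Arguments. Unset Strict Implicit. Unset Printing Implicit Defensive.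
Import Order.TTheory GRing.Theory Num.Theory.
Local Open Scope ring_scope.

Definition ratmx (n : nat) (A : 'M[int]_n) : 'M[rat]_n := map_mx (intr : int -> rat) A.
Definition ratcv (n : nat) (v : 'cV[int]_n) : 'cV[rat]_n := map_mx (intr : int -> rat) v.

Definition Zmatrix (n : nat) (L : 'M[int]_n) : Prop :=
  forall i j : 'I_n, i != j -> L i j <= 0.

Definition nonsingular_Mmatrix (n : nat) (L : 'M[int]_n) : Prop :=
  [/\ Zmatrix L, ratmx L \in unitmx &
      forall i j : 'I_n, 0 <= invmx (ratmx L) i j].

Definition nonneg_vec (n : nat) (v : 'cV[int]_n) : Prop :=
  forall i : 'I_n, 0 <= v i 0.

Definition equivL (n : nat) (L : 'M[int]_n) (f g : 'cV[int]_n) : Prop :=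
  exists z : 'cV[int]_n, g - f = L *m z.

Definition energy (n : nat) (L : 'M[int]_n) (q : 'cV[int]_n) : rat :=
  let v := invmx (ratmx L) *m ratcv q in \sum_(i < n) (v i 0) ^+ 2.

(* Main.v *)
Require Import Defs.
From HB Require Import structures.
From mathcomp Require Import all_boot all_order all_algebra.
From Stdlib Require Classical_Prop.
Import Order.TTheory GRing.Theory Num.Theory.
Local Open Scope ring_scope.

Section S.
Variables (n : nat) (L : 'M[int]_n) (f : 'cV[int]_n).
Hypothesis HL : nonsingular_Mmatrix L.
Hypothesis Hf : nonneg_vec f.

Definition Mi := invmx (ratmx L).
Definition cc := Mi *m ratcv f.
Definition feas (z : 'cV[int]_n) := nonneg_vec (f + L *m z).

Lemma ratcvD (u v : 'cV[int]_n) : ratcv (u + v) = ratcv u + ratcv v.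
Proof. by rewrite /ratcv map_mxD. Qed.

Lemma ratcvM (z : 'cV[int]_n) : ratcv (L *m z) = ratmx L *m ratcv z.
Proof. by rewrite /ratcv /ratmx map_mxM. Qed.

Lemma xE z : Mi *m ratcv (f + L *m z) = cc + ratcv z.
Proof.
case: HL => _ Hu _.
by rewrite ratcvD ratcvM mulmxDr /Mi mulKmx.
Qed.

Lemma x_ge0 g : nonneg_vec g -> forall i, 0 <= (Mi *m ratcv g) i 0.
Proof.
move=> Hg i; rewrite mxE; apply: sumr_ge0 => j _.
case: HL => _ _ Hp.
apply: mulr_ge0; first exact: Hp.
by rewrite /ratcv mxE ler0z.
Qed.

Lemma xz_ge0 z : feas z -> forall i, 0 <= cc i 0 + (z i 0)%:~R.
Proof.
move=> Hz i; have := @x_ge0 _ Hz i.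
by rewrite xE !mxE.
Qed.

Lemma energyE z : energy L (f + L *m z) = \sum_i ((cc + ratcv z) i 0) ^+ 2.
Proof. by rewrite /energy -/Mi xE. Qed.

Definition bnd (i : 'I_n) : int := Num.floor (- cc i 0).

Lemma bnd_le z : feas z -> forall i, bnd i <= z i 0.
Proof.
move=> Hz i; rewrite /bnd -(ler_int rat).
apply: le_trans (floor_le _) _.
rewrite lerNl -subr_ge0 opprK. exact: xz_ge0.
Qed.

Definition minv (z w : 'cV[int]_n) : 'cV[int]_n := \col_i Num.min (z i 0) (w i 0).

Lemma feas_le (z m : 'cV[int]_n) i : feas z -> (forall j, m j 0 <= z j 0) -> m i 0 = z i 0 ->
  0 <= (f + L *m m) i 0.
Proof.
move=> Hz Hle Hm; apply: le_trans (Hz i) _.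
rewrite !mxE lerD2l; apply: ler_sum => j _.
case: (eqVneq i j) => [<-|ij]; first by rewrite Hm.
case: HL => HZ _ _.
by apply: ler_wnM2l; [exact: HZ | exact: Hle].
Qed.

Lemma feas_min z w : feas z -> feas w -> feas (minv z w).
Proof.
move=> Hz Hw i.
case: (leP (z i 0) (w i 0)) => hzw.
- apply: (@feas_le z (minv z w) i Hz) => [j|]; first by rewrite mxE ge_min lexx.
  by rewrite mxE min_l.
- apply: (@feas_le w (minv z w) i Hw) => [j|]; first by rewrite mxE ge_min lexx orbT.
  by rewrite mxE min_r // ltW.
Qed.

Definition N (z : 'cV[int]_n) : int := \sum_i (z i 0 - bnd i).

Lemma N_ge0 z : feas z -> 0 <= N z.
Proof. move=> Hz; apply: sumr_ge0 => i _; rewrite subr_ge0; exact: bnd_le. Qed.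

Lemma N_lt z w i : feas z -> feas w -> w i 0 < z i 0 ->
  (absz (N (minv z w)) < absz (N z))%N.
Proof.
move=> Hz Hw hi.
rewrite -ltz_nat !abszE !ger0_norm ?N_ge0 //; last exact: feas_min.
rewrite -subr_gt0 /N -sumrB (bigD1 i) //=.
apply: lt_le_trans (_ : 0 < z i 0 - bnd i - (minv z w i 0 - bnd i)) _.
  by rewrite mxE min_r ?ltW // opprB addrA subrK subr_gt0.
rewrite lerDl; apply: sumr_ge0 => j _.
by rewrite opprB addrA subrK subr_ge0 mxE ge_min lexx.
Qed.

Lemma exists_least : exists z0, feas z0 /\ forall w, feas w -> forall i, z0 i 0 <= w i 0.
Proof.
apply: Classical_Prop.NNPP => H.
have step : forall z, feas z -> exists w, feas w /\ (absz (N w) < absz (N z))%N.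
  move=> z Hz; apply: Classical_Prop.NNPP => H2; apply: H; exists z; split => // w Hw i.
  rewrite leNgt; apply/negP => lt; apply: H2; exists (minv z w); split.
    exact: feas_min.
  exact: (@N_lt z w i Hz Hw lt).
suff: forall k z, feas z -> (absz (N z) <= k)%N -> False.
  move=> /(_ (absz (N 0)) 0); apply => //.
  by move=> i; rewrite mulmx0 addr0; exact: Hf.
elim=> [|k IH] z Hz Hk; have [w [Hw Hlt]] := step z Hz.
  by move: (leq_trans Hlt Hk).
by apply: (IH w Hw); rewrite -ltnS (leq_trans Hlt Hk).
Qed.

End S.

Theorem mainTheorem3 (n : nat) (L : 'M[int]_n) (f : 'cV[int]_n) :
  nonsingular_Mmatrix L -> nonneg_vec f ->
  exists! g : 'cV[int]_n,
    [/\ nonneg_vec g, equivL L f g &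
        forall h : 'cV[int]_n, nonneg_vec h -> equivL L f h ->
          energy L g <= energy L h].
Proof.
move=> HL Hf.
have [z0 [Hz0 Hle]] := @exists_least n L f HL Hf.
have key : forall z, feas n L f z -> forall i,
    0 <= (cc n L f + ratcv z0) i 0 <= (cc n L f + ratcv z) i 0.
  move=> z Hz i; rewrite !mxE.
  have := @xz_ge0 n L f HL z0 Hz0 i; rewrite /ratcv mxE => ->.
  by rewrite lerD2l ler_int Hle.
have fromeq : forall h, equivL L f h -> exists z, h = f + L *m z.
  by move=> h [z Hz]; exists z; rewrite -Hz addrC subrK.
have Emin : forall z, feas n L f z -> energy L (f + L *m z0) <= energy L (f + L *m z).
  move=> z Hz; rewrite !(@energyE n L f HL); apply: ler_sum => i _.
  have /andP [a b] := key z Hz i.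
  by rewrite !expr2 ler_pM // (le_trans a b).
exists (f + L *m z0); split.
  split => //; first by exists z0; rewrite addrAC subrr add0r.
  move=> h Hh /fromeq [z Ez]; subst h; exact: Emin.
move=> g [Hg /fromeq [z Ez] Hmin]; subst g.
have Ee : energy L (f + L *m z0) = energy L (f + L *m z).
  apply/eqP; rewrite eq_le Emin //; apply: Hmin => //.
  by exists z0; rewrite addrAC subrr add0r.
move: (esym Ee); rewrite !(@energyE n L f HL) => /eqP; rewrite -subr_eq0 -sumrB => /eqP Hs.
have Hnn : forall j, true -> 0 <= (cc n L f + ratcv z) j 0 ^+ 2 - (cc n L f + ratcv z0) j 0 ^+ 2.
  move=> j _; have /andP [a b] := key z Hg j.
  by rewrite subr_ge0 !expr2 ler_pM // (le_trans a b).
have Hi : forall i, z0 i 0 = z i 0.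
  move=> i; have /andP [a b] := key z Hg i.
  move: (psumr_eq0P Hnn Hs (i := i) isT) => /eqP.
  rewrite subr_eq0 eqrXn2 // ?(le_trans a b) // !mxE.
  by rewrite (inj_eq (addrI _)) eqr_int => /eqP ->.
congr (_ + _ *m _); apply/matrixP => i j; by rewrite (ord1 j) Hi.
Qed.
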